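(* Let $q$ be a positive rational number and let $M_q$ be the exponentially cyclic Puiseux monoid parametrized by $q$. If the monoid algebra $\mathbb{Z}[M_q]$ is atomic, then the monoid algebra $\mathbb{Q}[M_q]$ is atomic.
   Context: For a positive rational $q$, $M_q := \langle q^n : n \in \mathbb{N}_0 \rangle$ is the additive submonoid of $(\mathbb{Q}_{\geq 0},+)$ generated by the powers of $q$. For a commutative ring $R$, $R[M_q]$ denotes the monoid algebra: finite expressions $\sum_i r_i x^{m_i}$ with $r_i \in R$ and $m_i \in M_q$, with multiplication determined by $x^a x^b = x^{a+b}$. An integral domain is atomic if every nonzero nonunit is a finite product of irreducible elements. *)

(* Defs.v *)
From HB Require Import structures.
From mathcomp Require Import all_boot all_order all_algebra.
From mathcomp Require Import boolp.
From mathcomp.multinomials Require Import monalg.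

Set Implicit Arguments.
Unset Strict Implicit.
Unset Printing Implicit Defensive.

Import Order.TTheory GRing.Theory Num.Theory.
Local Open Scope ring_scope.

Definition posrat := {q : rat | 0 < q}.

(* Membership in M_q = < q^n : n in N_0 >, the additive submonoid of
   (Q_{>=0},+) generated by the powers of q: finite sums of powers of q. *)
Definition inMq (q : posrat) (x : rat) : Prop :=
  exists s : seq nat, x = \sum_(n <- s) (val q) ^+ n.

Definition Mq_pred (q : posrat) : pred rat := fun x => `[< inMq q x >].

(* The monoid M_q as a type (written additively in the paper; here its
   operation is rational addition and its neutral element 0). *)
Definition Mq (q : posrat) := {x : rat | Mq_pred q x}.

HB.instance Definition _ q := [isSub for (@proj1_sig rat (Mq_pred q)) : Mq q -> rat].
HB.instance Definition _ q := [Choice of Mq q by <:].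

Section MqMonoid.
Variable q : posrat.

Lemma Mq0 : Mq_pred q 0.
Proof. by apply/asboolP; exists [::]; rewrite big_nil. Qed.

Lemma MqD (x y : rat) : Mq_pred q x -> Mq_pred q y -> Mq_pred q (x + y).
Proof.
move=> /asboolP [s ->] /asboolP [t ->]; apply/asboolP.
by exists (s ++ t); rewrite big_cat.
Qed.

Lemma Mq_ge0 (x : rat) : Mq_pred q x -> 0 <= x.
Proof.
move=> /asboolP [s ->]; apply: sumr_ge0 => n _.
by apply: exprn_ge0; apply: ltW; case: q.
Qed.

Definition Mq_zero : Mq q := exist _ 0 Mq0.
Definition Mq_add (x y : Mq q) : Mq q := exist _ (val x + val y) (MqD (valP x) (valP y)).

Lemma Mq_addA : associative Mq_add.
Proof. by move=> x y z; apply: val_inj; rewrite /= addrA. Qed.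
Lemma Mq_add0m : left_id Mq_zero Mq_add.
Proof. by move=> x; apply: val_inj; rewrite /= add0r. Qed.
Lemma Mq_addm0 : right_id Mq_zero Mq_add.
Proof. by move=> x; apply: val_inj; rewrite /= addr0. Qed.
Lemma Mq_addC : commutative Mq_add.
Proof. by move=> x y; apply: val_inj; rewrite /= addrC. Qed.
Lemma Mq_unit (x y : Mq q) : Mq_add x y = Mq_zero -> x = Mq_zero /\ y = Mq_zero.
Proof.
move=> /(congr1 val) /= /eqP; rewrite paddr_eq0 ?Mq_ge0 ?(valP x) ?(valP y) //.
by case/andP=> /eqP hx /eqP hy; split; apply: val_inj.
Qed.
End MqMonoid.

HB.instance Definition _ q := Choice_isMonomialDef.Build (Mq q)
  (@Mq_addA q) (@Mq_add0m q) (@Mq_addm0 q) (@Mq_unit q).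
HB.instance Definition _ q := MonomialDef_isConomialDef.Build (Mq q) (@Mq_addC q).

(* The monoid algebra R[M_q] is {malg R[Mq q]} (multinomials' monalg):
   finitely supported functions M_q -> R with convolution product
   x^a x^b = x^(a+b). *)

Definition is_unit_elt (R : comNzRingType) (a : R) : Prop := exists b : R, a * b = 1.

Definition irreducible_elt (R : comNzRingType) (a : R) : Prop :=
  a != 0 /\ ~ is_unit_elt a /\
  forall b c : R, a = b * c -> is_unit_elt b \/ is_unit_elt c.

Definition atomic (R : comNzRingType) : Prop :=
  forall a : R, a != 0 -> ~ is_unit_elt a ->
    exists s : seq R, (forall x, x \in s -> irreducible_elt x) /\
                      a = \prod_(x <- s) x.

(* Main.v *)
Require Import Defs.
From HB Require Import structures.
From mathcomp Require Import all_boot all_order all_algebra.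
From mathcomp.multinomials Require Import monalg.
From mathcomp Require Import finmap boolp.
From mathcomp Require Import ring lra zify.

Set Implicit Arguments.
Unset Strict Implicit.
Unset Printing Implicit Defensive.

Import Order.TTheory GRing.Theory Num.Theory.
Local Open Scope ring_scope.

Section Aux.
Variable q : posrat.
Local Notation K := (Mq q).

Lemma valM (x y : K) : val (mmul x y) = val x + val y.
Proof. by []. Qed.
Lemma val1 : val (mone : K) = 0.
Proof. by []. Qed.
Lemma val_ge0 (x : K) : 0 <= val x.
Proof. exact: Mq_ge0 (valP x). Qed.

Lemma exists_max (s : seq K) (P : pred K) : has P s ->
  exists i, [/\ i \in s, P i & forall k, k \in s -> P k -> val k <= val i].
Proof.
elim: s => //= a s IH Hs.
case: (boolP (has P s)) => [/IH [i [iS Pi hi]]|hn].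
  case: (boolP (P a && (val i < val a))) => [/andP [Pa lt]|hn].
    exists a; split => //; first by rewrite inE eqxx.
    move=> k; rewrite inE => /orP [/eqP -> _|ks Pk]; first by rewrite lexx.
    exact: le_trans (hi k ks Pk) (ltW lt).
  exists i; split => //; first by rewrite inE iS orbT.
  move=> k; rewrite inE => /orP [/eqP ->|ks] Pk; last exact: hi.
  by move: hn; rewrite Pk /= leNgt.
have Pa : P a by case/orP: Hs => // h; rewrite h in hn.
exists a; split => //; first by rewrite inE eqxx.
move=> k; rewrite inE => /orP [/eqP -> _|ks Pk]; first by rewrite lexx.
by move/hasPn: hn => /(_ k ks); rewrite Pk.
Qed.

Lemma key (R : comNzRingType) (P : pred R) (g1 g2 : {malg R[K]}) (i j : K) :
  P 0 -> (forall x y, P x -> P y -> P (x + y)) ->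
  (forall x y, P x -> P (x * y)) -> (forall x y, P y -> P (x * y)) ->
  (forall k, val i < val k -> P g1@_k) -> (forall k, val j < val k -> P g2@_k) ->
  P ((g1 * g2)@_(mmul i j) - g1@_i * g2@_j).
Proof.
move=> P0 PD PMl PMr h1 h2.
have PT : forall k1 k2, (k1 != i) || (k2 != j) ->
    P ((g1@_k1 * g2@_k2) *+ (mmul k1 k2 == mmul i j)).
  move=> k1 k2 hne; case: eqP => [e|_]; last by rewrite mulr0n.
  rewrite mulr1n.
  have hv : val k1 + val k2 = val i + val j by move: (congr1 val e).
  have [lt1|le1] := ltP (val i) (val k1); first exact/PMl/h1.
  have [lt2|le2] := ltP (val j) (val k2); first exact/PMr/h2.
  have e1 : val k1 = val i by lra.
  have e2 : val k2 = val j by lra.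
  by move: hne; rewrite (val_inj e1) (val_inj e2) !eqxx.
rewrite (mcoeffMlw _ (fsubsetUr [fset i]%fset (msupp g1)) (fsubsetUr [fset j]%fset (msupp g2))).
rewrite (bigD1_seq i) ?fset_uniq //=; last by rewrite !inE eqxx.
rewrite (bigD1_seq j) ?fset_uniq //=; last by rewrite !inE eqxx.
rewrite eqxx mulr1n.
have -> : forall a b c : R, a + b + c - a = b + c by move=> a b c; ring.
have PS : forall (I : eqType) (r : seq I) (Q : pred I) (F : I -> R),
    (forall x, Q x -> P (F x)) -> P (\sum_(x <- r | Q x) F x).
  move=> I r Q F h; elim: r => [|a r IH]; rewrite ?big_nil ?big_cons //.
  by case: ifP => // Qa; apply: PD => //; apply: h.
apply: (PD).
  by apply: (PS) => k2 hk2; apply: PT; rewrite hk2 orbT.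
apply: (PS) => k1 hk1; apply: (PS) => k2 _.
by apply: PT; rewrite hk1.
Qed.


Definition nonconst (R : zmodType) (g : {malg R[K]}) : Prop :=
  exists k, k != mone /\ g@_k != 0.

Lemma maxsupp (R : zmodType) (g : {malg R[K]}) : g != 0 ->
  exists i, i \in msupp g /\ forall k, val i < val k -> g@_k = 0.
Proof.
move=> g0.
have : msupp g != fset0 by rewrite msupp_eq0.
case/fset0Pn => x xg.
have [|i [ig _ hi]] := @exists_max (msupp g) predT; first by apply/hasP; exists x.
exists i; split => // k lt.
case: (boolP (k \in msupp g)) => [kg|kg]; last exact: mcoeff_outdom.
by have := hi k kg isT; rewrite leNgt lt.
Qed.

Lemma unit_const (R : idomainType) (g : {malg R[K]}) :
  is_unit_elt g -> forall k, k != mone -> g@_k = 0.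
Proof.
case=> h gh k hk.
have g0 : g != 0 by apply/eqP => g0; move/eqP: gh; rewrite g0 mul0r eq_sym oner_eq0.
have h0 : h != 0 by apply/eqP => h0; move/eqP: gh; rewrite h0 mulr0 eq_sym oner_eq0.
have [i [ig hi]] := maxsupp g0.
have [j [jh hj]] := maxsupp h0.
have PD : forall x y : R, x == 0 -> y == 0 -> x + y == 0.
  by move=> x y /eqP -> /eqP ->; rewrite addr0.
have PMl : forall x y : R, x == 0 -> x * y == 0.
  by move=> x y /eqP ->; rewrite mul0r.
have PMr : forall x y : R, y == 0 -> x * y == 0.
  by move=> x y /eqP ->; rewrite mulr0.
have H1 : forall k, val i < val k -> g@_k == 0 by move=> k' /hi ->.
have H2 : forall k, val j < val k -> h@_k == 0 by move=> k' /hj ->.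
have := @key R (fun x => x == 0) g h i j (eqxx 0) PD PMl PMr H1 H2.
rewrite gh mcoeff1.
have nz : g@_i * h@_j != 0 by rewrite mulf_neq0 // mcoeff_neq0.
case: (boolP (_ == mone)) => [/eqP e|ne]; last first.
  by rewrite /= sub0r oppr_eq0 (negbTE nz).
move=> _.
have vi : val i = 0.
  have := congr1 val e; rewrite valM val1 => e'.
  have := val_ge0 i; have := val_ge0 j; lra.
case: (boolP (k \in msupp g)) => [kg|kg]; last exact: mcoeff_outdom.
have hk' : val k <= val i.
  rewrite leNgt; apply/negP => /hi /eqP; rewrite mcoeff_eq0 kg //.
have : val k = val (mone : K) by rewrite val1; have := val_ge0 k; lra.
by move/val_inj => e2; rewrite e2 eqxx in hk.
Qed.

Lemma nonconst_nunit (R : idomainType) (g : {malg R[K]}) :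
  nonconst g -> ~ is_unit_elt g.
Proof. by case=> k [kn gk] /unit_const /(_ k kn) /eqP; rewrite (negbTE gk). Qed.

Lemma nonconst_neq0 (R : zmodType) (g : {malg R[K]}) : nonconst g -> g != 0.
Proof. by case=> k [_ gk]; apply: contraNneq gk => ->; rewrite mcoeff0. Qed.

Lemma const_unit (F : fieldType) (g : {malg F[K]}) :
  g != 0 -> ~ nonconst g -> is_unit_elt g.
Proof.
move=> g0 nc.
have [c [c0 e]] : exists c, c != 0 /\ g = c%:MP.
  have e : g = (g@_mone)%:MP.
    apply/malgP => k; rewrite mcoeffC.
    case: (eqVneq k mone) => [->|hk]; first by rewrite mulr1n.
    rewrite mulr0n; case: (eqVneq (g@_k) 0) => // hne.
    by case: nc; exists k.
  exists (g@_mone); split => //.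
  by apply: contraNneq g0 => h; rewrite e h malgC0E.
exists (c^-1)%:MP; by rewrite e -mpolyCM mulfV // mpolyC1E.
Qed.

Lemma unit_mul (R : comNzRingType) (u v : R) :
  is_unit_elt u -> is_unit_elt v -> is_unit_elt (u * v).
Proof. by case=> a ua [b vb]; exists (a * b); rewrite mulrACA ua vb mulr1. Qed.

Lemma irr_unit (R : comNzRingType) (u h : R) :
  is_unit_elt u -> irreducible_elt h -> irreducible_elt (u * h).
Proof.
case=> w uw [h0 [hnu hirr]]; split; [|split].
- apply: contraNneq h0 => e.
  have <- : w * (u * h) = h by rewrite mulrA (mulrC w) uw mul1r.
  by rewrite e mulr0.
- case=> v e; apply: hnu; exists (u * v); by rewrite mulrCA mulrA.
- move=> b c e.
  have : h = (w * b) * c by rewrite -mulrA -e mulrA (mulrC w) uw mul1r.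
  move/hirr => [[y wy]|hc]; last by right.
  by left; exists (w * y); rewrite mulrCA mulrA.
Qed.


Definition emb (g : {malg int[K]}) : {malg rat[K]} :=
  \sum_(k <- msupp g) << (g@_k)%:~R *g k >>.

Lemma embE g k : (emb g)@_k = (g@_k)%:~R.
Proof.
rewrite [in RHS](monalgE g) /emb !raddf_sum /=.
by apply: eq_bigr => x _; rewrite !mcoeffU rmorphMn.
Qed.

Lemma emb_inj : injective emb.
Proof.
move=> a b e; apply/malgP => k.
by have := congr1 (mcoeff k) e; rewrite !embE => /intr_inj.
Qed.

Lemma msupp_emb g : msupp (emb g) = msupp g.
Proof. by apply/fsetP => k; rewrite -!mcoeff_neq0 embE intr_eq0. Qed.

Lemma embM a b : emb (a * b) = emb a * emb b.
Proof.
apply/malgP => k; rewrite embE !mcoeffMl !msupp_emb rmorph_sum.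
apply: eq_bigr => k1 _; rewrite rmorph_sum; apply: eq_bigr => k2 _.
by rewrite rmorphMn rmorphM !embE.
Qed.

Lemma emb1 : emb 1 = 1.
Proof. by apply/malgP => k; rewrite embE !mcoeff1 rmorph_nat. Qed.

Lemma emb0 : emb 0 = 0.
Proof. by apply/malgP => k; rewrite embE !mcoeff0. Qed.

Lemma embZ (c : int) g : emb (c *: g) = c%:~R *: emb g.
Proof. by apply/malgP => k; rewrite embE !mcoeffZ rmorphM embE. Qed.

Lemma emb_prod (s : seq {malg int[K]}) :
  emb (\prod_(x <- s) x) = \prod_(x <- s) emb x.
Proof.
elim: s => [|x s IH]; first by rewrite !big_nil emb1.
by rewrite !big_cons embM IH.
Qed.

Lemma clear (f : {malg rat[K]}) :
  exists n : nat, exists F, (0 < n)%N /\ emb F = n%:R *: f.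
Proof.
rewrite (monalgE f); elim: (enum_fset (msupp f)) => [|k s [n [F [n0 e]]]].
  by exists 1%N, 0; rewrite big_nil emb0 scaler0.
rewrite big_cons; set x := f@_k.
set S := \sum_(_ <- s) _ in e *.
pose m := `|denq x|%N.
have hm : (m%:R : rat) = (denq x)%:~R by rewrite /m natr_absz gtr0_norm ?denq_gt0.
have m0 : (0 < m)%N by rewrite /m absz_gt0 denq_neq0.
exists (n * m)%N, ((m%:Z) *: F + (n%:Z) *: << numq x *g k >>); split.
  by rewrite muln_gt0 n0 m0.
apply/malgP => k'.
have := congr1 (mcoeff k') e; rewrite embE mcoeffZ => ek.
rewrite embE !mcoeffZ !mcoeffD !mcoeffZ !mcoeffU rmorphD !rmorphM /= ek.
have hc : forall j : nat, ((j%:Z)%:~R : rat) = j%:R by [].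
case: eqP => _; rewrite ?mulr1n ?mulr0n ?mulr0 ?addr0 ?add0r !hc.
  rewrite numqE -hm; ring.
ring.
Qed.


Lemma gauss (p : nat) (A B : {malg int[K]}) : prime p ->
  (forall k, (p%:Z %| (A * B)@_k)%Z) ->
  (forall k, (p%:Z %| A@_k)%Z) \/ (forall k, (p%:Z %| B@_k)%Z).
Proof.
move=> pp hAB.
case: (pselect (forall k, (p%:Z %| A@_k)%Z)) => hA; first by left.
case: (pselect (forall k, (p%:Z %| B@_k)%Z)) => hB; first by right.
exfalso.
have bad : forall (C : {malg int[K]}), ~ (forall k, (p%:Z %| C@_k)%Z) ->
    exists i, ~~ (p%:Z %| C@_i)%Z /\ forall k, val i < val k -> (p%:Z %| C@_k)%Z.
  move=> C hC.
  have [k1 hk1] : exists k, ~~ (p%:Z %| C@_k)%Z.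
    case: (pselect (exists k, ~~ (p%:Z %| C@_k)%Z)) => // h.
    case: hC => k; case: (boolP (p%:Z %| C@_k)%Z) => // hk.
    by case: h; exists k.
  have k1C : k1 \in msupp C.
    by rewrite -mcoeff_neq0; apply: contraNneq hk1 => ->; rewrite dvdz0.
  have [|i [iC Pi hi]] := @exists_max (msupp C) (fun k => ~~ (p%:Z %| C@_k)%Z).
    by apply/hasP; exists k1.
  exists i; split => // k lt.
  case: (boolP (p%:Z %| C@_k)%Z) => // hk.
  have kC : k \in msupp C.
    by rewrite -mcoeff_neq0; apply: contraNneq hk => ->; rewrite dvdz0.
  by have := hi k kC hk; rewrite leNgt lt.
have [i [Ai hi]] := bad A hA.
have [j [Bj hj]] := bad B hB.
have := @key _ (fun x : int => (p%:Z %| x)%Z) A B i j (dvdz0 _)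
  (fun x y hx hy => rpredD hx hy) (fun x y hx => dvdz_mulr y hx)
  (fun x y hy => dvdz_mull x hy) hi hj.
move=> /= h1; have := hAB (mmul i j) => h2.
have : (p%:Z %| (A * B)@_(mmul i j) - ((A * B)@_(mmul i j) - A@_i * B@_j))%Z.
  by rewrite rpredB.
rewrite subKr dvdzE abszM Euclid_dvdM //.
by rewrite -!dvdzE (negbTE Ai) (negbTE Bj).
Qed.

Lemma scaleU (R : comNzRingType) (c x : R) (k : K) :
  c *: << x *g k >> = << c * x *g k >>.
Proof. by apply/malgP => k'; rewrite mcoeffZ !mcoeffU mulrnAr. Qed.

Lemma divout (p : int) (B : {malg int[K]}) :
  (forall k, (p %| B@_k)%Z) -> exists B', B = p *: B'.
Proof.
move=> h; exists (\sum_(k <- msupp B) << (B@_k %/ p)%Z *g k >>).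
rewrite scaler_sumr [in LHS](monalgE B); apply: eq_bigr => k _.
by rewrite scaleU mulrC divzK.
Qed.

Lemma cancelZ (p : int) (X Y : {malg int[K]}) : p != 0 -> p *: X = p *: Y -> X = Y.
Proof.
move=> p0 e; apply/malgP => k.
by have := congr1 (mcoeff k) e; rewrite !mcoeffZ => /(mulfI p0).
Qed.

Lemma nonconst_div (p : int) (B : {malg int[K]}) :
  nonconst (p *: B) -> nonconst B.
Proof.
case=> k [kn hk]; exists k; split => //.
by apply: contraNneq hk => e; rewrite mcoeffZ e mulr0.
Qed.

Lemma noZfact (g : {malg int[K]}) : irreducible_elt g ->
  forall N, (0 < N)%N -> forall B C, nonconst B -> nonconst C ->
  B * C = (N%:Z) *: g -> False.
Proof.
move=> [g0 [gnu girr]] N.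
elim/ltn_ind: N => N IH N0 B C hB hC e.
case: (eqVneq N 1%N) => [N1|N1].
  subst N; rewrite scale1r in e.
  by case: (girr _ _ (esym e)); [exact: nonconst_nunit hB|exact: nonconst_nunit hC].
have N1' : (1 < N)%N by lia.
set p := pdiv N.
have pp : prime p := pdiv_prime N1'.
have pN : (p %| N)%N := pdiv_dvd N.
have p1 : (1 < p)%N := prime_gt1 pp.
have eN : N = (p * (N %/ p))%N by rewrite mulnC divnK.
have lt : (N %/ p < N)%N by apply: ltn_Pdiv.
have Np0 : (0 < N %/ p)%N by rewrite divn_gt0 ?(ltnW p1) //; apply: dvdn_leq.
have p0 : (p%:Z != 0) by rewrite eqz_nat; apply/eqP => h; rewrite h in p1.
have eN' : (N%:Z) *: g = (p%:Z) *: ((N %/ p)%:Z *: g).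
  by rewrite scalerA -PoszM -eN.
have hAB : forall k, (p%:Z %| (B * C)@_k)%Z.
  move=> k; rewrite e mcoeffZ; apply: dvdz_mulr.
  by rewrite dvdzE /=.
case: (gauss pp hAB) => [/divout [B' eB]|/divout [C' eC]].
  apply: (IH (N %/ p)%N lt Np0 B' C) => //.
    by apply: (nonconst_div (p:=p)); rewrite -eB.
  apply: (cancelZ p0); rewrite -eN' -e eB.
  by rewrite scalerAl.
apply: (IH (N %/ p)%N lt Np0 B C') => //.
  by apply: (nonconst_div (p:=p)); rewrite -eC.
apply: (cancelZ p0); rewrite -eN' -e eC.
by rewrite scalerAr.
Qed.


Lemma irr_transfer (g : {malg int[K]}) :
  irreducible_elt g -> nonconst g -> irreducible_elt (emb g).
Proof.
move=> gi [k0 [k0n gk0]].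
have ncg : nonconst (emb g) by exists k0; rewrite embE intr_eq0.
have ig0 : emb g != 0 := nonconst_neq0 ncg.
split=> //; split; first exact: nonconst_nunit.
move=> b c e.
case: (pselect (nonconst b)) => hb; last first.
  left; apply: const_unit => //.
  by apply: contraNneq ig0 => b0; rewrite e b0 mul0r.
case: (pselect (nonconst c)) => hc; last first.
  right; apply: const_unit => //.
  by apply: contraNneq ig0 => c0; rewrite e c0 mulr0.
exfalso.
have [n1 [B [n10 eB]]] := clear b.
have [n2 [C [n20 eC]]] := clear c.
have hc' : forall j : nat, ((j%:Z)%:~R : rat) = j%:R by [].
have eBC : B * C = ((n1 * n2)%N%:Z) *: g.
  apply: emb_inj; rewrite embM eB eC embZ hc' -scalerAl -scalerAr scalerA e.
  by rewrite natrM.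
have nc : forall (n : nat) (X : {malg int[K]}) (x : {malg rat[K]}),
    (0 < n)%N -> emb X = n%:R *: x -> nonconst x -> nonconst X.
  move=> n X x n0 eX [k [kn xk]]; exists k; split => //.
  have := congr1 (mcoeff k) eX; rewrite embE mcoeffZ => h.
  apply: contraNneq xk => Xk; move: h; rewrite Xk /= => /esym /eqP.
  by rewrite mulf_eq0 pnatr_eq0 eqn0Ngt n0.
have h12 : (0 < n1 * n2)%N by rewrite muln_gt0 n10 n20.
exact: (noZfact gi h12 (nc _ _ _ n10 eB hb) (nc _ _ _ n20 eC hc) eBC).
Qed.

Lemma assemble (s : seq {malg int[K]}) :
  (forall x, x \in s -> irreducible_elt x) ->
  forall u : {malg rat[K]}, is_unit_elt u ->
  is_unit_elt (u * \prod_(x <- s) emb x) \/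
  exists t, (forall y, y \in t -> irreducible_elt y) /\
            u * \prod_(x <- s) emb x = \prod_(y <- t) y.
Proof.
elim: s => [|x s IH] hs u hu; first by left; rewrite big_nil mulr1.
have hx : irreducible_elt x by apply: hs; rewrite inE eqxx.
have hs' : forall y, y \in s -> irreducible_elt y.
  by move=> y ys; apply: hs; rewrite inE ys orbT.
rewrite big_cons.
case: (pselect (nonconst x)) => ncx.
  have ix := irr_transfer hx ncx.
  case: (IH hs' u hu) => [hw|[t [ht et]]].
    right; exists [:: (u * \prod_(y <- s) emb y) * emb x]; split.
      by move=> y; rewrite inE => /eqP ->; apply: irr_unit.
    by rewrite big_seq1 mulrCA [RHS]mulrC.
  right; exists (emb x :: t); split.
    by move=> y; rewrite inE => /orP [/eqP ->|]; [|apply: ht].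
  by rewrite big_cons -et mulrCA.
have ux : is_unit_elt (emb x).
  apply: const_unit.
    by apply: contraNneq hx.1 => h; apply/eqP; apply: emb_inj; rewrite h emb0.
  case=> k [kn ik]; apply: ncx; exists k; split => //.
  by move: ik; rewrite embE intr_eq0.
by have := IH hs' _ (unit_mul hu ux); rewrite -mulrA.
Qed.
End Aux.

Theorem proposition2p1 (q : posrat) :
  atomic {malg int[Mq q]} -> atomic {malg rat[Mq q]}.
Proof.
move=> hZ f f0 fnu.
have ncf : nonconst f.
  by case: (pselect (nonconst f)) => // h; case: fnu; apply: const_unit.
have [n [F [n0 eF]]] := clear f.
have ncF : nonconst F.
  case: ncf => k [kn fk]; exists k; split => //.
  have := congr1 (mcoeff k) eF; rewrite embE mcoeffZ => h.
  apply: contraNneq fk => Fk; move: h; rewrite Fk /= => /esym /eqP.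
  by rewrite mulf_eq0 pnatr_eq0 eqn0Ngt n0.
have [s [hs eFs]] := hZ F (nonconst_neq0 ncF) (nonconst_nunit ncF).
have n0' : (n%:R : rat) != 0 by rewrite pnatr_eq0 -lt0n.
have hu : is_unit_elt ((n%:R^-1 : rat)%:MP : {malg rat[Mq q]}).
  by exists (n%:R)%:MP; rewrite -mpolyCM mulVf // mpolyC1E.
have ef : f = (n%:R^-1 : rat)%:MP * \prod_(x <- s) emb x.
  by rewrite -emb_prod -eFs eF mul_malgC scalerA (mulVf n0') scale1r.
case: (assemble hs hu); rewrite -ef; first by [].
by case=> t [ht et]; exists t.
Qed.
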